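(* In the setting described in the context, let $Q(k)=W(k)-H\bar H W(k)$ and $\gamma=\lambda_{\max}\big(\mathbb{E}[Q(k)^TQ(k)]\big)$. Then $\gamma<1$.
   Context: Let $V=\{1,\ldots,N\}$, $N\ge 2$, and let $G_I=(V,E_I)$ be a connected undirected graph which is not complete, with adjacency matrix $A$; let $B=A+I_N$. For $i\in V$ let $N_I(i)$ be the set of neighbors of $i$ in $G_I$, $\tilde N_I(i)=N_I(i)\cup\{i\}$, $m_i=\deg_{G_I}(i)+1$, $m=\sum_{i=1}^N m_i$. For $i,j\in V$ set $s_{ij}=\sum_{l=1}^{j}B(i,l)+\sum_{r=1}^{i-1}m_r$ (the last sum is $0$ for $i=1$). Let $e_1,\ldots,e_m$ be the standard basis of $\mathbb{R}^m$ and define $E_j^i=e_{s_{ij}}$ if $j\in\tilde N_I(i)$ and $E_j^i=\mathbf{0}_m$ otherwise. Let $H=\big[\sum_{i=1}^N E_1^i,\ldots,\sum_{i=1}^N E_N^i\big]\in\mathbb{R}^{m\times N}$ and $\bar H=\mathrm{diag}(1/m_1,\ldots,1/m_N)H^T$. Let $G_C=(V,E_C)$ be a communication graph with $G_m\subseteq G_C\subseteq G_I$, where $G_m$ is a maximal triangle-free spanning subgraph of $G_I$ (a triangle-free spanning subgraph such that adding any edge of $G_I$ not in it creates a triangle); $N_C(i)$ denotes the neighbors of $i$ in $G_C$. For $i,j\in V$ let $\mathrm{ind}(i,j)=\tilde N_I(i)\cap\tilde N_I(j)$ and $W_{ij}=I_m-\tfrac12\sum_{l\in \mathrm{ind}(i,j)}(E_l^{i}-E_l^{j})(E_l^{i}-E_l^{j})^T$.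 The random matrix $W(k)$ is $W_{i_kj_k}$, where $i_k$ is drawn uniformly at random from $V$ and then $j_k$ is drawn uniformly at random from $N_C(i_k)$; the expectation is with respect to this random choice. *)

(* Defs.v *)
From HB Require Import structures.
From mathcomp Require Import all_boot all_order all_algebra.
From mathcomp Require Import polyrcf.
Set Implicit Arguments. Unset Strict Implicit. Unset Printing Implicit Defensive.
Import Order.TTheory GRing.Theory Num.Theory.
Local Open Scope ring_scope.

(* Vertices V = {1..N} are represented by 'I_N (vertex v <-> ordinal v-1).
   Graphs are given by their (boolean) adjacency relation. *)

Section Defs.
Variable N : nat.
Implicit Types (e : rel 'I_N).

Definition simple_graph e := irreflexive e /\ symmetric e.
Definition connected_graph e := forall i j : 'I_N, connect e i j.
Definition complete_graph e := forall i j : 'I_N, i != j -> e i j.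
Definition subgraph (e1 e2 : rel 'I_N) := forall i j, e1 i j -> e2 i j.
Definition triangle_free e := forall i j k : 'I_N, ~ [&& e i j, e j k & e k i].
Definition maximal_triangle_free_spanning (eM eI : rel 'I_N) :=
  [/\ simple_graph eM, subgraph eM eI, triangle_free eM &
      forall i j, eI i j -> ~~ eM i j ->
        (* adding the edge {i,j} creates a triangle *)
        exists k, eM i k && eM k j].

Definition cnbhd e (i : 'I_N) : {set 'I_N} := [set j | e i j || (j == i)].
Definition Bmat e (i l : 'I_N) : nat := (e i l || (i == l)).
Definition mdeg e (i : 'I_N) : nat := #|cnbhd e i|.
Definition mtot e : nat := \sum_(i < N) mdeg e i.

(* s_{ij} (1-based position in R^m, as in the paper, with 1-based vertex
   labels i.+1, j.+1) *)
Definition spos e (i j : 'I_N) : nat :=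
  \sum_(l < N | (l <= j)%N) Bmat e i l + \sum_(r < N | (r < i)%N) mdeg e r.

Variable R : rcfType.

(* E_j^i = e_{s_ij} (standard basis vector, 1-based index) or 0 *)
Definition Evec e (i j : 'I_N) : 'cV[R]_(mtot e) :=
  \col_(k < mtot e) ((j \in cnbhd e i) && (k.+1 == spos e i j))%:R.

Definition Hmat e : 'M[R]_(mtot e, N) :=
  \matrix_(k < mtot e, j < N) \sum_(i < N) Evec e i j k 0.

Definition Hbar e : 'M[R]_(N, mtot e) :=
  \matrix_(i < N, k < mtot e) ((mdeg e i)%:R^-1 * Hmat e k i).

Definition Wmat e (i j : 'I_N) : 'M[R]_(mtot e) :=
  1%:M - 2%:R^-1 *: \sum_(l in cnbhd e i :&: cnbhd e j)
           ((Evec e i l - Evec e j l) *m (Evec e i l - Evec e j l)^T).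

Definition Qmat e (i j : 'I_N) : 'M[R]_(mtot e) :=
  Wmat e i j - Hmat e *m Hbar e *m Wmat e i j.

(* Expectation over i uniform in V, then j uniform in N_C(i). *)
Definition expect_pair (eC : rel 'I_N) n (X : 'I_N -> 'I_N -> 'M[R]_n) :
  'M[R]_n :=
  \sum_(i < N) (N%:R^-1 *:
     \sum_(j < N | eC i j) (#|[set j | eC i j]|%:R^-1 *: X i j)).

(* Largest (real) eigenvalue of a square matrix: the largest real root of
   its characteristic polynomial (rootsR lists the real roots increasingly). *)
Definition lambda_max n (M : 'M[R]_n) : R := last 0 (rootsR (char_poly M)).

End Defs.

(* Main.v *)
Require Import Defs.
From HB Require Import structures.
From mathcomp Require Import all_boot all_order all_algebra.
From mathcomp Require Import polyrcf ring.
Import Order.TTheory GRing.Theory Num.Theory.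
Set Implicit Arguments. Unset Strict Implicit. Unset Printing Implicit Defensive.

Section Slots.
Variable N : nat.
Variable e : rel 'I_N.

Definition cnt (i j : 'I_N) := \sum_(l < N | (l <= j)%N) Bmat e i l.
Definition off (i : 'I_N) := \sum_(r < N | (r < i)%N) mdeg e r.

Lemma Bmat_mem i l : Bmat e i l = (l \in cnbhd e i).
Proof. by rewrite /Bmat inE eq_sym. Qed.

Lemma mdeg_sum i : mdeg e i = \sum_l Bmat e i l.
Proof.
rewrite /mdeg -sum1_card big_mkcond /=; apply: eq_bigr => l _.
by rewrite Bmat_mem; case: (l \in _).
Qed.

Lemma cnt_le i j : cnt i j <= mdeg e i.
Proof.
rewrite mdeg_sum /cnt big_mkcond /=; apply: leq_sum => l _.
by case: ifP.
Qed.

Lemma cnt_pos i j : j \in cnbhd e i -> 0 < cnt i j.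
Proof.
move=> hj; rewrite /cnt (bigD1 j) //= Bmat_mem hj.
by rewrite addSn.
Qed.

Lemma cnt_lt i (j j' : 'I_N) : j < j' -> j' \in cnbhd e i -> cnt i j < cnt i j'.
Proof.
move=> ljj hj; rewrite /cnt [X in _ < X](bigD1 j') //= Bmat_mem hj add1n ltnS.
rewrite [X in _ <= X]big_mkcond [X in X <= _]big_mkcond /=; apply: leq_sum => l _.
case: ifP => // hl; rewrite (leq_trans hl (ltnW ljj)) /=.
by rewrite ifT // -val_eqE /= neq_ltn (leq_ltn_trans hl ljj).
Qed.

Lemma off_lt (i i' : 'I_N) : i < i' -> off i + mdeg e i <= off i'.
Proof.
move=> lii; rewrite /off [X in _ <= X](bigD1 i) //= addnC leq_add2l.
rewrite [X in _ <= X]big_mkcond [X in X <= _]big_mkcond /=; apply: leq_sum => l _.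
case: ifP => // hl; rewrite (ltn_trans hl lii) /=.
by rewrite ifT // -val_eqE /= neq_ltn hl.
Qed.

Lemma off_le i : off i + mdeg e i <= mtot e.
Proof.
rewrite /off /mtot [X in _ <= X](bigD1 i) //= addnC leq_add2l.
rewrite [X in _ <= X]big_mkcond [X in X <= _]big_mkcond /=; apply: leq_sum => l _.
case: ifP => // hl; by rewrite ifT // -val_eqE /= neq_ltn hl.
Qed.

Lemma spos_E i j : spos e i j = cnt i j + off i.
Proof. by []. Qed.

Lemma spos_range i j : j \in cnbhd e i -> 0 < spos e i j <= mtot e.
Proof.
move=> hj; rewrite spos_E addn_gt0 cnt_pos //=.
apply: leq_trans (off_le i); rewrite addnC leq_add2l; exact: cnt_le.
Qed.

Lemma spos_inj i j i' j' : j \in cnbhd e i -> j' \in cnbhd e i' ->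
  spos e i j = spos e i' j' -> i = i' /\ j = j'.
Proof.
move=> hj hj'.
have key : forall i j i' j', j \in cnbhd e i -> j' \in cnbhd e i' ->
   i < i' -> spos e i j < spos e i' j'.
  move=> a b a' b' hb hb' la; rewrite !spos_E.
  apply: (@leq_trans (off a + mdeg e a).+1).
    by rewrite ltnS addnC leq_add2l cnt_le.
  apply: (@leq_trans (cnt a' b' + (off a + mdeg e a))).
    by rewrite -add1n leq_add2r cnt_pos.
  by rewrite leq_add2l off_lt.
move=> heq.
case: (ltngtP i i') => [lt|lt|/val_inj eqi].
- by move: heq => /eqP; rewrite ltn_eqF // key.
- by move: heq => /eqP; rewrite gtn_eqF // key.
subst i'; split => //.
case: (ltngtP j j') => [lt|lt|/val_inj -> //].
- by move: heq => /eqP; rewrite !spos_E eqn_add2r ltn_eqF // cnt_lt.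
- by move: heq => /eqP; rewrite !spos_E eqn_add2r gtn_eqF // cnt_lt.
Qed.

Lemma card_pairs :
  #|[set p : 'I_N * 'I_N | p.2 \in cnbhd e p.1]| = mtot e.
Proof.
rewrite -sum1_card big_mkcond /= /mtot.
transitivity (\sum_(i < N) \sum_(j < N) (if j \in cnbhd e i then 1 else 0)).
  by rewrite pair_bigA; apply: eq_bigr => p _; rewrite inE.
by apply: eq_bigr => i _; rewrite /mdeg -sum1_card [RHS]big_mkcond.
Qed.

Lemma spos_surj (k : 'I_(mtot e)) :
  exists i j, j \in cnbhd e i /\ spos e i j = k.+1.
Proof.
pose S := [set p : 'I_N * 'I_N | p.2 \in cnbhd e p.1].
have memS p : (p \in S) = (p.2 \in cnbhd e p.1) by rewrite in_set.
pose g (p : 'I_N * 'I_N) : 'I_(mtot e) := insubd k (spos e p.1 p.2).-1.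
have rng p : p \in S -> (spos e p.1 p.2).-1 < mtot e /\ (spos e p.1 p.2).-1.+1 = spos e p.1 p.2.
  rewrite memS => hp; have /andP[p1 q1] := spos_range hp.
  by rewrite prednK.
have ginj : {in S &, injective g}.
  move=> p q hp hq; have [r1 e1] := rng p hp; have [r2 e2] := rng q hq.
  move/(congr1 val); rewrite /g !val_insubd /= r1 r2 => /(congr1 succn).
  rewrite e1 e2; case: p q hp hq {r1 e1 r2 e2} => [a b] [a' b'].
  rewrite !memS /= => hb hb' /(spos_inj hb hb') [-> ->] //.
have : g @: S = [set: 'I_(mtot e)].
  apply/eqP; rewrite eqEcard subsetT /= card_in_imset // card_pairs.
  by rewrite cardsT card_ord.
move=> /setP /(_ k); rewrite inE => /imsetP [p hp].
have [r1 e1] := rng p hp.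
move/(congr1 val); rewrite /g val_insubd /= r1 => ->.
by exists p.1, p.2; rewrite e1 -memS.
Qed.

End Slots.

Local Open Scope ring_scope.

Section Mats.
Variable R : rcfType.
Variable N : nat.
Variable e : rel 'I_N.
Hypothesis esymm : symmetric e.

Local Notation m := (mtot e).
Definition dotv (a b : 'cV[R]_m) := \sum_k a k 0 * b k 0.
Local Notation u := (Evec R e).

Lemma dotvC a b : dotv a b = dotv b a.
Proof. by apply: eq_bigr => k _; rewrite mulrC. Qed.
Lemma dotvBl a b c : dotv (a - b) c = dotv a c - dotv b c.
Proof. by rewrite /dotv -sumrB; apply: eq_bigr => k _; rewrite !mxE mulrBl. Qed.
Lemma dotvDl a b c : dotv (a + b) c = dotv a c + dotv b c.
Proof. by rewrite /dotv -big_split; apply: eq_bigr => k _; rewrite !mxE mulrDl. Qed.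
Lemma dotvBr a b c : dotv c (a - b) = dotv c a - dotv c b.
Proof. by rewrite !(dotvC c) dotvBl. Qed.
Lemma dotvDr a b c : dotv c (a + b) = dotv c a + dotv c b.
Proof. by rewrite !(dotvC c) dotvDl. Qed.
Lemma dotv_suml I (r : seq I) (P : pred I) (F : I -> 'cV[R]_m) b :
  dotv (\sum_(i <- r | P i) F i) b = \sum_(i <- r | P i) dotv (F i) b.
Proof.
rewrite /dotv; under eq_bigr do rewrite summxE big_distrl /=.
exact: exchange_big.
Qed.
Lemma dot_tr a b : a^T *m b = (dotv a b)%:M.
Proof.
rewrite [LHS]mx11_scalar mxE; congr (_ %:M).
by apply: eq_bigr => k _; rewrite mxE.
Qed.

Lemma dotv_ge0 a : 0 <= dotv a a.
Proof. by apply: sumr_ge0 => k _; rewrite -expr2 sqr_ge0. Qed.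

Lemma dotv_eq0 a : dotv a a = 0 -> a = 0.
Proof.
move=> h.
have nn : forall k : 'I_m, true -> 0 <= a k 0 * a k 0.
  by move=> k' _; rewrite -expr2 sqr_ge0.
have H0 := psumr_eq0P nn h.
apply/matrixP => k t; rewrite ord1 mxE.
by have /eqP := H0 k isT; rewrite mulf_eq0 orbb => /eqP.
Qed.

Lemma sum_delta s (F : 'I_m -> R) (k0 : 'I_m) :
  k0.+1 = s -> \sum_(k < m) ((k.+1 == s)%:R * F k) = F k0.
Proof.
move=> h; rewrite (bigD1 k0) //= h eqxx mul1r big1 ?addr0 // => k hk.
by rewrite -h eqSS val_eqE (negbTE hk) mul0r.
Qed.

Lemma slot_exists i j : j \in cnbhd e i -> exists k0 : 'I_m, k0.+1 = spos e i j.
Proof.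
move=> hj; have /andP[a b] := spos_range hj.
have hk : ((spos e i j).-1 < m)%N by rewrite prednK.
by exists (Ordinal hk); rewrite /= prednK.
Qed.

Lemma Evec_val i j k : u i j k 0 = ((j \in cnbhd e i) && (k.+1 == spos e i j))%:R.
Proof. by rewrite mxE. Qed.

Lemma dot_u i j i' j' :
  dotv (u i j) (u i' j') = ((j \in cnbhd e i) && (i == i') && (j == j'))%:R.
Proof.
rewrite /dotv.
case hv: (j \in cnbhd e i); last first.
  by rewrite big1 // => k _; rewrite Evec_val hv mul0r.
case hv': (j' \in cnbhd e i'); last first.
  rewrite big1 => [|k _]; last by rewrite (Evec_val i') hv' mulr0.
  case: (eqVneq i i') => [ei|ne]; case: (eqVneq j j') => [ej|ne'] //=.
  by subst; rewrite hv in hv'.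
case: (eqVneq i i') => [ei|ne]; case: (eqVneq j j') => [ej|ne'] //=.
- subst; have [k0 hk0] := slot_exists hv.
  under eq_bigr do rewrite !Evec_val hv /=.
  by rewrite (sum_delta _ hk0) hk0 eqxx.
- rewrite big1 // => k _; rewrite !Evec_val hv hv' /=.
  case: eqP => [h1|]; case: eqP => [h2|] /=; rewrite ?mulr0 ?mul0r //.
  by have [_ /eqP] := spos_inj hv hv' (etrans (esym h1) h2); rewrite (negbTE ne').
- rewrite big1 // => k _; rewrite !Evec_val hv hv' /=.
  case: eqP => [h1|]; case: eqP => [h2|] /=; rewrite ?mulr0 ?mul0r //.
  by have [/eqP] := spos_inj hv hv' (etrans (esym h1) h2); rewrite (negbTE ne).
- rewrite big1 // => k _; rewrite !Evec_val hv hv' /=.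
  case: eqP => [h1|]; case: eqP => [h2|] /=; rewrite ?mulr0 ?mul0r //.
  by have [/eqP] := spos_inj hv hv' (etrans (esym h1) h2); rewrite (negbTE ne).
Qed.

Lemma dot_u_x i j (x : 'cV[R]_m) (k0 : 'I_m) : j \in cnbhd e i -> k0.+1 = spos e i j ->
  dotv (u i j) x = x k0 0.
Proof.
move=> hv hk; rewrite /dotv; under eq_bigr do rewrite Evec_val hv /=.
exact: sum_delta.
Qed.

Definition hcol (j : 'I_N) : 'cV[R]_m := \sum_i u i j.

Lemma Hmat_hcol k j : Hmat R e k j = hcol j k 0.
Proof. by rewrite mxE summxE. Qed.

Lemma mdeg_pos j : (0 < mdeg e j)%N.
Proof.
have hj : j \in cnbhd e j by rewrite inE eqxx orbT.
exact: leq_trans (cnt_pos hj) (cnt_le _ _ _).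
Qed.

Lemma HtH j j' : dotv (hcol j) (hcol j') = (j == j')%:R * (mdeg e j)%:R.
Proof.
rewrite /hcol dotv_suml.
under eq_bigr => i _ do rewrite dotvC dotv_suml.
under eq_bigr => i _ do under eq_bigr => i' _ do rewrite dot_u.
have inner : forall i : 'I_N, \sum_(i' < N) ((j' \in cnbhd e i') && (i' == i) && (j' == j))%:R
    = ((j' \in cnbhd e i) && (j' == j))%:R :> R.
  move=> i; rewrite (bigD1 i) //= eqxx andbT big1 ?addr0 // => i' hi'.
  by rewrite (negbTE hi') andbF.
under eq_bigr => i _ do rewrite inner.
case: (eqVneq j' j) => [->|ne]; last first.
  by rewrite mul0r big1 // => i _; rewrite andbF.
rewrite mul1r /mdeg -sumr_const big_mkcond /=.
rewrite [RHS]big_mkcond; apply: eq_bigr => i _; rewrite andbT !inE esymm eq_sym.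
by case: (_ || _).
Qed.

End Mats.

Section Mats2.
Variable R : rcfType.
Variable N : nat.
Variable e : rel 'I_N.
Hypothesis esymm : symmetric e.

Local Notation m := (mtot e).
Local Notation u := (Evec R e).
Local Notation dotv := (@dotv R N e).
Local Notation H := (Hmat R e).
Local Notation Hb := (Hbar R e).

Lemma mdeg_neq0 j : (mdeg e j)%:R != 0 :> R.
Proof. by rewrite pnatr_eq0 -lt0n mdeg_pos. Qed.

Lemma HbarH : Hb *m H = 1%:M.
Proof.
apply/matrixP => i j; rewrite !mxE.
under eq_bigr do rewrite mxE -mulrA !Hmat_hcol.
rewrite -big_distrr /= -/(dotv _ _) HtH // mulrCA mulVf ?mdeg_neq0 // mulr1.
by rewrite eq_sym.
Qed.

Lemma P_sym : (H *m Hb)^T = H *m Hb.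
Proof.
apply/matrixP => k k'; rewrite !mxE; apply: eq_bigr => j _.
rewrite /Hbar !mxE; ring.
Qed.

Lemma P_idem : (H *m Hb) *m (H *m Hb) = H *m Hb.
Proof. by rewrite -mulmxA (mulmxA Hb) HbarH mul1mx. Qed.

Lemma Hbar_x (x : 'cV[R]_m) j :
  (Hb *m x) j 0 = (mdeg e j)%:R^-1 * \sum_i dotv (u i j) x.
Proof.
rewrite mxE; under eq_bigr do rewrite mxE -mulrA Hmat_hcol.
by rewrite -big_distrr /= -dotv_suml.
Qed.

Lemma proj_split (P : 'M[R]_m) (y : 'cV[R]_m) : P^T = P -> P *m P = P ->
  dotv y y = dotv (P *m y) (P *m y) + dotv (y - P *m y) (y - P *m y).
Proof.
move=> sP iP.
have h0 : dotv (P *m y) (y - P *m y) = 0.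
  have := dot_tr (P *m y) (y - P *m y).
  rewrite trmx_mul sP -mulmxA mulmxBr mulmxA iP subrr mulmx0 => /esym.
  by move/(congr1 (fun M : 'M[R]_1 => M 0 0)); rewrite !mxE eqxx mulr1n.
have -> : dotv y y = dotv (P *m y + (y - P *m y)) (P *m y + (y - P *m y)).
  by rewrite addrC subrK.
move: h0; set z := P *m y; set w := y - z => h0.
by rewrite dotvDl (dotvDr z w z) (dotvDr z w w) h0 (dotvC w) h0 addr0 add0r.
Qed.

End Mats2.

Section WW.
Variable R : rcfType.
Variable N : nat.
Variable e : rel 'I_N.
Hypothesis esymm : symmetric e.
Variables i j : 'I_N.
Hypothesis hij : i != j.

Local Notation m := (mtot e).
Local Notation u := (Evec R e).
Local Notation dotv := (@dotv R N e).
Local Notation H := (Hmat R e).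
Local Notation Hb := (Hbar R e).

Let A := cnbhd e i :&: cnbhd e j.
Let dd l : 'cV[R]_m := u i l - u j l.
Let Sm : 'M[R]_m := \sum_(l in A) dd l *m (dd l)^T.

Lemma Wmat_E : Wmat R e i j = 1%:M - 2^-1 *: Sm.
Proof. by []. Qed.

Lemma dot_dd l l' : l \in A -> l' \in A -> dotv (dd l) (dd l') = (l == l')%:R *+ 2.
Proof.
rewrite !in_setI => /andP[hi hj] /andP[hi' hj'].
rewrite /dd dotvBl !dotvBr !dot_u hi hj !eqxx (negbTE hij) (eq_sym j i) (negbTE hij) /=.
by rewrite subr0 sub0r opprK mulr2n.
Qed.

Lemma Sm_sym : Sm^T = Sm.
Proof.
apply/matrixP => a b; rewrite mxE !summxE; apply: eq_bigr => l _.
by rewrite !mxE !big_ord1 !mxE mulrC.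
Qed.

Lemma two_neq0 : (2 : R) != 0.
Proof. by rewrite pnatr_eq0. Qed.

Lemma ddTdd l l' : dd l *m (dd l)^T *m (dd l' *m (dd l')^T)
   = dotv (dd l) (dd l') *: (dd l *m (dd l')^T).
Proof.
by rewrite mulmxA -(mulmxA (dd l)) dot_tr mul_mx_scalar scalemxAl.
Qed.

Lemma Sm_sq : Sm *m Sm = 2 *: Sm.
Proof.
rewrite /Sm mulmx_suml scaler_sumr; apply: eq_bigr => l hl.
rewrite mulmx_sumr.
under eq_bigr => l' hl' do rewrite ddTdd dot_dd //.
rewrite (bigD1 l) //= eqxx big1 ?addr0 // => l' /andP[_ hl'].
by rewrite eq_sym (negbTE hl') mul0rn scale0r.
Qed.

Let PW : 'M[R]_m := 2^-1 *: Sm.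

Lemma PW_sym : PW^T = PW.
Proof. by rewrite /PW linearZ /= Sm_sym. Qed.

Lemma PW_idem : PW *m PW = PW.
Proof.
rewrite /PW -scalemxAl -scalemxAr Sm_sq scalerA scalerA.
by rewrite mulrC mulrA divff ?two_neq0 // mul1r.
Qed.

Lemma Sm_x (x : 'cV[R]_m) l' : l' \in A ->
  ((dd l')^T *m (Sm *m x)) 0 0 = 2 * dotv (dd l') x.
Proof.
move=> hl'; rewrite /Sm mulmx_suml mulmx_sumr summxE.
under eq_bigr => l hl do rewrite -mulmxA mulmxA !dot_tr -scalar_mxM mxE eqxx mulr1n dot_dd //.
rewrite (bigD1 l') //= eqxx big1 ?addr0 => [|l /andP[_ hl]]; last first.
  by rewrite eq_sym (negbTE hl) mul0rn mul0r.
by [].  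
Qed.

Lemma Qmat_x (x : 'cV[R]_m) :
  Qmat R e i j *m x = Wmat R e i j *m x - (H *m Hb) *m (Wmat R e i j *m x).
Proof. by rewrite /Qmat mulmxBl !mulmxA. Qed.

Lemma Wmat_x (x : 'cV[R]_m) : Wmat R e i j *m x = x - PW *m x.
Proof. by rewrite Wmat_E mulmxBl mul1mx. Qed.

Lemma Q_le (x : 'cV[R]_m) :
  dotv (Qmat R e i j *m x) (Qmat R e i j *m x) <= dotv x x.
Proof.
rewrite (proj_split x PW_sym PW_idem) -Wmat_x.
rewrite [X in _ <= _ + X](proj_split _ (@P_sym R N e) (@P_idem R N e esymm)) -Qmat_x.
by rewrite addrA lerDr addr_ge0 // dotv_ge0.
Qed.

Lemma Q_eq (x : 'cV[R]_m) :
  dotv (Qmat R e i j *m x) (Qmat R e i j *m x) = dotv x x ->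
  (forall l, l \in A -> dotv (u i l) x = dotv (u j l) x) /\
  (forall l, \sum_i' dotv (u i' l) x = 0).
Proof.
rewrite (proj_split x PW_sym PW_idem) -Wmat_x.
rewrite [X in _ = _ + X](proj_split _ (@P_sym R N e) (@P_idem R N e esymm)) -Qmat_x.
rewrite addrA -{1}(add0r (dotv (Qmat _ _ _ _ *m x) _)) => /addIr /esym.
move/eqP; rewrite paddr_eq0 ?dotv_ge0 // => /andP[/eqP h1 /eqP h2].
have hPW := dotv_eq0 h1; have hP := dotv_eq0 h2.
rewrite Wmat_x hPW subr0 in hP.
split.
  move=> l hl; apply/eqP; rewrite -subr_eq0 -dotvBl -/(dd l).
  have : Sm *m x = 0.
    move: hPW; rewrite /PW -scalemxAl => /eqP; rewrite scaler_eq0 invr_eq0.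
    by rewrite (negbTE two_neq0) => /eqP.
  move/(congr1 (fun M => ((dd l)^T *m M) 0 0)); rewrite Sm_x // mulmx0 mxE.
  by move/eqP; rewrite mulf_eq0 (negbTE two_neq0).
move=> l; have : Hb *m x = 0.
  by rewrite -[x]subr0 -hP mulmxBr !mulmxA HbarH // mul1mx subrr.
move/(congr1 (fun M : 'cV[R]_N => M l 0)); rewrite Hbar_x mxE => /eqP.
by rewrite mulf_eq0 invr_eq0 (negbTE (mdeg_neq0 R _ _)) => /eqP.
Qed.

End WW.

Lemma Evec_invalid (R : rcfType) N (e : rel 'I_N) i j x :
  j \notin cnbhd e i -> dotv (Evec R e i j) x = 0.
Proof.
move=> hv; rewrite /dotv big1 // => k _.
by rewrite Evec_val (negbTE hv) mul0r.
Qed.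

Lemma consensus (R : rcfType) N (eI eM eC : rel 'I_N) (x : 'cV[R]_(mtot eI)) :
  symmetric eI ->
  maximal_triangle_free_spanning eM eI -> subgraph eM eC ->
  (forall i j, eC i j -> forall l, l \in cnbhd eI i :&: cnbhd eI j ->
      dotv (Evec R eI i l) x = dotv (Evec R eI j l) x) ->
  (forall l, \sum_i dotv (Evec R eI i l) x = 0) ->
  x = 0.
Proof.
move=> esymm [_ sMI _ maxM] sMC C1 C2.
pose a i l := dotv (Evec R eI i l) x.
have memI : forall i l, eI i l -> l \in cnbhd eI i by move=> i l h; rewrite inE h.
have memS : forall l, l \in cnbhd eI l by move=> l; rewrite inE eqxx orbT.
have key : forall i j, j \in cnbhd eI i -> a i j = a j j.
  move=> i j; rewrite inE => /orP[hij|/eqP->//].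
  case hm: (eM i j).
    by apply: C1; [exact: sMC | rewrite in_setI memI // memS].
  have [k /andP[hik hkj]] := maxM i j hij (negbT hm).
  have hkjI : eI k j := sMI _ _ hkj.
  rewrite /a (C1 i k (sMC _ _ hik)); last by rewrite in_setI !memI.
  by apply: C1; [exact: sMC | rewrite in_setI memI // memS].
have zero : forall j, a j j = 0.
  move=> j; have := C2 j.
  have -> : \sum_i dotv (Evec R eI i j) x = \sum_(i in [set i | j \in cnbhd eI i]) a j j.
    rewrite [RHS]big_mkcond; apply: eq_bigr => i _; rewrite inE.
    case: ifP => hv; first exact: key.
    by apply: Evec_invalid; rewrite hv.
  rewrite sumr_const => /eqP; rewrite mulrn_eq0 => /orP[|/eqP //].
  by rewrite (cardD1 j) inE memS.
apply/matrixP => k t; rewrite ord1 mxE.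
have [i [j [hv hk]]] := spos_surj k.
by rewrite -(dot_u_x x hv (esym hk)) -/(a i j) key.
Qed.

Lemma qf_sum (R : rcfType) n (v : 'rV[R]_n) I (r : seq I) (P : pred I) (F : I -> 'M[R]_n) :
  (v *m (\sum_(i <- r | P i) F i) *m v^T) 0 0 = \sum_(i <- r | P i) (v *m F i *m v^T) 0 0.
Proof. by rewrite mulmx_sumr mulmx_suml summxE. Qed.

Lemma qf_scale (R : rcfType) n (v : 'rV[R]_n) c (F : 'M[R]_n) :
  (v *m (c *: F) *m v^T) 0 0 = c * (v *m F *m v^T) 0 0.
Proof. by rewrite -scalemxAr -scalemxAl mxE. Qed.

Lemma sum_lt (R : rcfType) (I : finType) (P : pred I) (F G : I -> R) i0 :
  P i0 -> (forall i, P i -> F i <= G i) -> F i0 < G i0 ->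
  \sum_(i | P i) F i < \sum_(i | P i) G i.
Proof.
move=> p0 hle hlt; rewrite (bigD1 i0) //= [X in _ < X](bigD1 i0) //=.
by apply: ltr_leD => //; apply: ler_sum => i /andP[hi _]; exact: hle.
Qed.

Unset Implicit Arguments.

Theorem lemma6 (R : rcfType) (N : nat) (eI eM eC : rel 'I_N) :
  (2 <= N)%N ->
  simple_graph eI -> connected_graph eI -> ~ complete_graph eI ->
  maximal_triangle_free_spanning eM eI ->
  symmetric eC -> subgraph eM eC -> subgraph eC eI ->
  lambda_max (expect_pair eC
     (fun i j => (Qmat R eI i j)^T *m Qmat R eI i j)) < 1.
Proof.
move=> N2 [irrI symI] conI _ hmax symC sMC sCI.
set M := expect_pair _ _.
rewrite /lambda_max.
case E: (rootsR (char_poly M)) => [|r s]; first exact: ltr01.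
set lam := last 0 (r :: s).
have : lam \in rootsR (char_poly M) by rewrite E /lam /= mem_last.
rewrite /rootsR => /root_roots; rewrite -eigenvalue_root_char.
move=> /eigenvalueP [v hv vnz].
pose x := v^T.
pose n := dotv x x.
have xnz : x != 0.
  apply: contra vnz => /eqP hx; apply/eqP.
  by rewrite -[v]trmxK -/x hx linear0.
have npos : 0 < n.
  rewrite lt_def dotv_ge0 andbT; apply: contra xnz => /eqP h.
  by rewrite (dotv_eq0 h).
pose f i j := dotv (Qmat R eI i j *m x) (Qmat R eI i j *m x).
have hqf : forall i j, (v *m ((Qmat R eI i j)^T *m Qmat R eI i j) *m v^T) 0 0 = f i j.
  move=> i j; rewrite /f; have := dot_tr (Qmat R eI i j *m x) (Qmat R eI i j *m x).
  move/(congr1 (fun M : 'M[R]_1 => M 0 0)); rewrite [X in _ = X -> _]mxE /= mulr1n => <-.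
  by rewrite /x trmx_mul trmxK !mulmxA.
have hne : forall i j, eC i j -> i != j.
  move=> i j /sCI h; apply: contraTneq h => ->; by rewrite irrI.
have fle : forall i j, eC i j -> f i j <= n.
  move=> i j h; have := Q_le symI (hne _ _ h) x. by [].
have key : (v *m M *m v^T) 0 0 = lam * n.
  rewrite hv -scalemxAl mxE /n; congr (_ * _).
  have := dot_tr x x; move/(congr1 (fun M : 'M[R]_1 => M 0 0)).
  by rewrite [X in _ = X]mxE /= mulr1n => <-; rewrite /x trmxK.
pose d i := #|[set j | eC i j]|.
pose g i := \sum_(j < N | eC i j) ((d i)%:R^-1 * f i j).
have hM : (v *m M *m v^T) 0 0 = \sum_(i < N) (N%:R^-1 * g i).
  rewrite /M /expect_pair qf_sum; apply: eq_bigr => i _.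
  rewrite qf_scale qf_sum; congr (_ * _); apply: eq_bigr => j _.
  by rewrite qf_scale hqf.
have gsum : forall i, \sum_(j < N | eC i j) ((d i)%:R^-1 * n) = if d i == 0%N then 0 else n.
  move=> i; rewrite (eq_bigl (fun j => j \in [set j | eC i j])); last first.
    by move=> j; rewrite inE.
  rewrite sumr_const -/(d i); case: eqP => [->|hd]; first by rewrite mulr0n.
  by rewrite -[X in X = _]mulr_natr mulrAC mulVf ?mul1r // pnatr_eq0; apply/eqP.
have gle : forall i, g i <= n.
  move=> i; apply: (@le_trans _ _ (\sum_(j < N | eC i j) ((d i)%:R^-1 * n))).
    apply: ler_sum => j hj; apply: ler_wpM2l; last exact: fle.
    by rewrite invr_ge0 ler0n.
  by rewrite gsum; case: ifP => // _; exact: ltW.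
have [[i0 [j0 [hc hlt]]] | hall] :
    (exists i0 j0, eC i0 j0 /\ f i0 j0 < n) \/ (forall i j, eC i j -> f i j = n).
  case: (boolP [exists i0, exists j0, eC i0 j0 && (f i0 j0 < n)]).
    by move=> /existsP [i0 /existsP [j0 /andP [h1 h2]]]; left; exists i0, j0.
  move=> hn; right => i j hc; apply/eqP; rewrite eq_le fle //=.
  move/existsPn: hn => /(_ i) /existsPn /(_ j); rewrite hc /= => h.
  by rewrite leNgt.
  have dpos : (0 < d i0)%N by rewrite /d (cardD1 j0) inE hc.
  have glt : g i0 < n.
    apply: (@lt_le_trans _ _ (\sum_(j < N | eC i0 j) ((d i0)%:R^-1 * n))).
      apply: (sum_lt hc) => [j hj|].
        apply: ler_wpM2l; last exact: fle.
        by rewrite invr_ge0 ler0n.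
      by rewrite ltr_pM2l // invr_gt0 ltr0n.
    by rewrite gsum (negbTE (lt0n_neq0 dpos)).
  have : lam * n < n.
    rewrite -key hM.
    have N0 : (0 < N)%N by apply: leq_trans N2.
    apply: (@lt_le_trans _ _ (\sum_(i < N) (N%:R^-1 * n))).
      apply: (@sum_lt R _ xpredT _ _ i0 isT).
        by move=> i _; apply: ler_wpM2l; [rewrite invr_ge0 ler0n | exact: gle].
      by rewrite ltr_pM2l // invr_gt0 ltr0n.
    rewrite sumr_const card_ord -[X in X <= _]mulr_natr mulrAC mulVf ?mul1r //.
    by rewrite pnatr_eq0 -lt0n.
  by rewrite -[X in _ < X]mul1r ltr_pM2r.
exfalso; move/negP: xnz; apply; apply/eqP.
apply: (consensus symI hmax sMC).
  move=> i j hc l hl.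
  by have [h1 _] := Q_eq symI (hne _ _ hc) (hall i j hc); apply: h1.
have [i [j hc]] : exists i j, eC i j.
  have N0 : (1 < N)%N by [].
  pose o0 : 'I_N := Ordinal (ltnW N0); pose o1 : 'I_N := Ordinal N0.
  have := conI o0 o1; move/connectP => [[|z p] /= hp hl].
    by move/(congr1 val): hl.
  have hz : eI o0 z by case/andP: hp.
  have [_ _ _ maxM] := hmax.
  case hm: (eM o0 z); first by exists o0, z; apply: sMC.
  have [k /andP[hk _]] := maxM o0 z hz (negbT hm).
  by exists o0, k; apply: sMC.
by have [_ h2] := Q_eq symI (hne _ _ hc) (hall i j hc); apply: h2.
Qed.
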